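(* Let $K\subset L\subset\mathbb{R}^2$ be convex compact sets with $\operatorname{vol}L>0$. Then for every unit vector $\bm u\in\mathbb{R}^2$, $$\frac{\operatorname{vol}P_{\bm u}K}{\operatorname{vol}P_{\bm u}L}\ \ge\ 1-\sqrt{1-\frac{\operatorname{vol}K}{\operatorname{vol}L}}.$$ The bound is tight: for every value $r\in[0,1]$ there exist such $K\subset L$ with $\operatorname{vol}K/\operatorname{vol}L=r$ and a direction $\bm u$ attaining equality.
   Context: $P_{\bm u}$ is the orthogonal projection onto the line orthogonal to $\bm u$; $\operatorname{vol}$ denotes area for subsets of $\mathbb{R}^2$ and length for subsets of a line. *)

(* Defs.v *)
From HB Require Import structures.
From mathcomp Require Import all_boot all_order all_algebra.
From mathcomp Require Import all_classical all_reals all_analysis.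
Set Implicit Arguments. Unset Strict Implicit. Unset Printing Implicit Defensive.
Import Order.TTheory GRing.Theory Num.Theory.
Import numFieldNormedType.Exports.
Local Open Scope classical_set_scope.
Local Open Scope ring_scope.

Definition convex2 {R : realType} (A : set (R * R)) : Prop :=
  forall x y, A x -> A y -> forall t : R, 0 <= t -> t <= 1 ->
    A (t * x.1 + (1 - t) * y.1, t * x.2 + (1 - t) * y.2).

Definition area {R : realType} (A : set (R * R)) : \bar R :=
  ((@lebesgue_measure R) \x (@lebesgue_measure R))%E A.

Definition len {R : realType} (A : set R) : \bar R := (@lebesgue_measure R) A.

Definition unit_vec {R : realType} (u : R * R) : Prop := u.1 ^+ 2 + u.2 ^+ 2 = 1.

(* P_u A: orthogonal projection of A onto the line orthogonal to u, identified
   isometrically with R via the coordinate along u^perp = (-u.2, u.1). *)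
Definition proj_perp {R : realType} (u : R * R) (A : set (R * R)) : set R :=
  [set u.1 * x.2 - u.2 * x.1 | x in A].

Definition vol_ratio {R : realType} (K L : set (R * R)) : R :=
  fine (area K) / fine (area L).

Definition proj_ratio {R : realType} (u : R * R) (K L : set (R * R)) : R :=
  fine (len (proj_perp u K)) / fine (len (proj_perp u L)).

(* Main.v *)
Require Import Defs.
From HB Require Import structures.
From mathcomp Require Import all_boot all_order all_algebra.
From mathcomp Require Import all_classical all_reals all_analysis.
From mathcomp Require Import measurable_realfun.
From mathcomp Require Import ring lra.
Set Implicit Arguments. Unset Strict Implicit. Unset Printing Implicit Defensive.
Import Order.TTheory GRing.Theory Num.Theory.
Import numFieldNormedType.Exports.
Local Open Scope classical_set_scope.
Local Open Scope ring_scope.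

Section S.
Context {R : realType}.
Local Notation mu := (@lebesgue_measure R).
Definition aff (c k : R) (x : measurableTypeR R) : measurableTypeR R := c + k * x.
Lemma aff_cont c k : continuous (aff c k).
Proof. move=> x; apply: cvgD; [exact: cvg_cst|]. apply: cvgMr. exact: cvg_id. Qed.
Lemma aff_mfun c k : measurable_fun setT (aff c k).
Proof. apply: continuous_measurable_fun; exact: aff_cont. Qed.
Lemma test c k (k0 : 0 < k) (A : set R) : measurable A ->
  mu A = (k%:E * mu (aff c k @^-1` A))%E.
Proof.
move=> mA.
have := @lebesgue_measure_unique R (mscale (NngNum (ltW k0)) (@pushforward _ _ _ _ R mu (aff c k))).
move=> /(_ (aff_mfun c k)) h; rewrite (h _ A mA) //.
move=> _ [[a b]] _ <-; rewrite /= /mscale /= /pushforward.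
have -> : aff c k @^-1` `]a, b]%classic = `](a - c) / k, (b - c) / k]%classic.
  apply/seteqP; split => x /=; rewrite /aff !in_itv /= ?ler_pdivlMr ?ltr_pdivrMr ?ltr_pdivlMr ?ler_pdivrMr //.
    by move=> /andP[h1 h2]; apply/andP; split; rewrite mulrC; lra.
  by move=> /andP[h1 h2]; apply/andP; split; rewrite mulrC in h1 h2; lra.
rewrite !lebesgue_measure_itv /= !lte_fin ltr_pM2r ?invr_gt0 // ltrD2r.
case: ifP => _; last by rewrite mule0.
by rewrite -EFinB -EFinM; congr (_%:E); field; rewrite gt_eqF.
Qed.
Lemma aff_pre c k (k0 : 0 < k) (A : set R) : measurable A ->
  mu (aff c k @^-1` A) = ((k^-1)%:E * mu A)%E.
Proof.
move=> mA; rewrite (test c k0 mA) muleA -EFinM mulVf ?gt_eqF// mul1e //.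
Qed.

Definition area2 (A : set (R * R)) : \bar R :=
  ((@lebesgue_measure R) \x (@lebesgue_measure R))%E A.

Lemma area_aff (c1 c2 k : R) (k0 : 0 < k) (A : set (R * R)) : measurable A ->
  area2 [set z | A (c1 + k * z.1, c2 + k * z.2)] = ((k^-1)%:E * ((k^-1)%:E * area2 A))%E.
Proof.
move=> mA; rewrite /area2 /product_measure1 /=.
pose f := (mu \o xsection A).
have mf : measurable_fun setT f by exact: measurable_fun_xsection.
transitivity (\int[mu]_x ((k^-1)%:E * f (aff c1 k x)))%E.
  apply: eq_integral => x _ /=.
  rewrite /f /= -(aff_pre c2 k0); last exact: measurable_xsection.
  congr (mu _); apply/seteqP; split => y /=; rewrite /xsection /aff /= !inE //.
rewrite ge0_integralZl_EFin ?invr_ge0 ?ltW//; last first.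
  exact: (measurableT_comp mf (aff_mfun c1 k)).
f_equal.
have := @ge0_integral_pushforward _ _ _ _ R (aff c1 k) (aff_mfun c1 k) mu setT f measurableT mf.
rewrite preimage_setT => <-; last by move=> y _; exact: measure_ge0.
have ki : 0 <= k^-1 by rewrite invr_ge0 ltW.
rewrite (eq_measure_integral (mscale (NngNum ki) mu)).
- apply: (@ge0_integral_mscale _ _ R mu setT measurableT (NngNum ki) f mf).
  by move=> y _; exact: measure_ge0.
- exact: aff_mfun.
- by move=> ? B mB _; exact: (aff_pre c1 k0 mB).
Qed.
Definition rbox (q : rat * rat * rat * rat) : set (R * R) :=
  `](ratr q.1.1.1 : R), ratr q.1.1.2[ `*` `](ratr q.1.2 : R), ratr q.2[.

Lemma open_measurable2 (U : set (R * R)) : open U -> measurable U.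
Proof.
move=> oU.
pose F q := if pselect (rbox q `<=` U) then rbox q else set0.
have -> : U = \bigcup_q F q.
  apply/seteqP; split; last first.
    move=> z [q _]; rewrite /F; case: pselect => // h; exact: h.
  move=> z Uz.
  have : nbhs z U by rewrite openE in oU; exact: oU.
  move=> /nbhs_ballP [e /= e0 ezU].
  have [q1 q1i] := @rat_in_itvoo R (z.1 - e) z.1 ltac:(lra).
  have [q2 q2i] := @rat_in_itvoo R z.1 (z.1 + e) ltac:(lra).
  have [q3 q3i] := @rat_in_itvoo R (z.2 - e) z.2 ltac:(lra).
  have [q4 q4i] := @rat_in_itvoo R z.2 (z.2 + e) ltac:(lra).
  move: q1i q2i q3i q4i; rewrite !in_itv /= => /andP[h1 h1'] /andP[h2 h2'] /andP[h3 h3'] /andP[h4 h4'].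
  have sub : rbox (q1, q2, q3, q4) `<=` U.
    move=> w [/=]; rewrite !in_itv /= => /andP[w1 w1'] /andP[w2 w2'].
    apply: ezU; split => /=; rewrite -ball_normE /ball_ /=; rewrite ltr_norml; apply/andP; split; lra.
  exists (q1, q2, q3, q4) => //; rewrite /F.
  destruct pselect as [h|n]; last by exfalso; exact: n sub.
  by split; rewrite /= in_itv /=; apply/andP; split.
have cQ : countable [set: rat * rat * rat * rat] by exact: countableP.
apply: (@countable_bigcupT_measurable _ _ _ F cQ).
move=> q; rewrite /F; destruct pselect as [h|n]; last exact: measurable0.
apply: measurableX; exact: measurable_itv.
Qed.
Definition tf (u : R * R) (z : R * R) : R := u.1 * z.2 - u.2 * z.1.
Lemma tf_cont u : continuous (tf u).
Proof.
move=> z; apply: cvgB; apply: cvgMr; [exact: cvg_snd | exact: cvg_fst].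
Qed.

Lemma line_null (u : R * R) c : unit_vec u -> area [set z | tf u z = c] = 0%E.
Proof.
rewrite /unit_vec => hu.
have [u10|u10] := eqVneq u.1 0.
  have u20 : u.2 != 0.
    by apply/eqP => h; move: hu; rewrite u10 h expr2 mulr0 addr0 => /esym/eqP; rewrite oner_eq0.
  have -> : [set z | tf u z = c] = [set - c / u.2] `*` [set: R].
    apply/seteqP; split => z /=; rewrite /tf u10 mul0r sub0r.
      by move=> <-; split => //=; field.
    by move=> [/= -> _]; field.
  rewrite /area product_measure1E //.
  transitivity (0 * mu setT)%E; last exact: mul0e.
  f_equal; exact: lebesgue_measure_set1.
rewrite /area /product_measure1 /=.
apply: integral0_eq => x _ /=.
have -> : xsection [set z | tf u z = c] x = [set (c + u.2 * x) / u.1].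
  apply/seteqP; split => y /=; rewrite /xsection /= inE /tf /=.
    by move=> <-; field.
  by move=> ->; field.
exact: lebesgue_measure_set1.
Qed.

Lemma closed_meas2 (A : set (R * R)) : closed A -> measurable A.
Proof. by move/closed_openC/open_measurable2/measurableC; rewrite setCK. Qed.

Lemma compact_meas2 (A : set (R * R)) : compact A -> measurable A.
Proof. by move=> cA; apply: closed_meas2; exact: (compact_closed (@norm_hausdorff _ _) cA). Qed.

Lemma tf_lt_meas u c : measurable [set z | tf u z < c].
Proof.
apply: open_measurable2; rewrite (_ : [set z | tf u z < c] = tf u @^-1` [set x | x < c]) //.
by apply: open_comp; [move=> z _; exact: tf_cont | exact: open_lt].
Qed.

Lemma tf_gt_meas u c : measurable [set z | c < tf u z].
Proof.
apply: open_measurable2; rewrite (_ : [set z | c < tf u z] = tf u @^-1` [set x | c < x]) //.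
by apply: open_comp; [move=> z _; exact: tf_cont | exact: open_gt].
Qed.

Lemma tf_eq_meas u c : measurable [set z | tf u z = c].
Proof.
apply: closed_meas2; rewrite (_ : [set z | tf u z = c] = tf u @^-1` [set c]) //.
apply: preimage_closed; [move=> z _; exact: tf_cont | exact: closed_eq].
Qed.

Lemma area_le (A B : set (R * R)) : measurable A -> measurable B -> A `<=` B ->
  (area A <= area B)%E.
Proof. by move=> mA mB AB; rewrite /area; apply: le_measure => //; rewrite inE. Qed.

Lemma areaU (A B : set (R * R)) : measurable A -> measurable B -> A `&` B = set0 ->
  area (A `|` B) = (area A + area B)%E.
Proof. by move=> mA mB AB; rewrite /area; exact: measureU. Qed.

Lemma area_ge0 (A : set (R * R)) : (0 <= area A)%E.
Proof. by rewrite /area; apply: integral_ge0 => x _; exact: measure_ge0. Qed.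

Lemma ex_min_max (A : set (R * R)) (f : R * R -> R) : continuous f ->
  A !=set0 -> compact A ->
  exists p0 p1, [/\ A p0, A p1 & forall x, A x -> f p0 <= f x <= f p1].
Proof.
move=> cf A0 cA.
have [p1 /set_mem Ap1 h1] := compact_EVT_max A0 cA (continuous_subspaceT cf).
have cf' : continuous (fun x => - f x) by move=> x; apply: cvgN; exact: cf.
have [p0 /set_mem Ap0 h0] := compact_EVT_max A0 cA (continuous_subspaceT cf').
exists p0, p1; split => // x Ax; apply/andP; split.
  by rewrite -lerN2; apply: h0; exact: mem_set.
by apply: h1; exact: mem_set.
Qed.

Lemma proj_eq (u : R * R) (A : set (R * R)) p0 p1 : convex2 A -> A p0 -> A p1 ->
  (forall x, A x -> tf u p0 <= tf u x <= tf u p1) ->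
  proj_perp u A = `[tf u p0, tf u p1]%classic.
Proof.
move=> cA Ap0 Ap1 h; apply/seteqP; split.
  by move=> _ [x Ax <-]; rewrite /= in_itv /=; exact: h.
move=> s; rewrite /= in_itv /= => /andP[s0 s1].
have [e|ne] := eqVneq (tf u p0) (tf u p1).
  exists p0 => //; rewrite /tf in e *; apply/eqP; rewrite eq_le; apply/andP; split => //.
  by rewrite e.
have lt01 : tf u p0 < tf u p1 by rewrite lt_neqAle ne (le_trans s0 s1).
set th := (s - tf u p0) / (tf u p1 - tf u p0).
have th0 : 0 <= th by apply: divr_ge0; lra.
have th1 : th <= 1 by rewrite ler_pdivrMr ?mul1r; lra.
exists (th * p1.1 + (1 - th) * p0.1, th * p1.2 + (1 - th) * p0.2); first exact: cA.
rewrite /th; move: ne lt01; rewrite /tf /= => ne lt01.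
field; rewrite subr_eq0 eq_sym; exact: ne.
Qed.

Lemma len_proj (u : R * R) (A : set (R * R)) p0 p1 : convex2 A -> A p0 -> A p1 ->
  (forall x, A x -> tf u p0 <= tf u x <= tf u p1) ->
  len (proj_perp u A) = (tf u p1 - tf u p0)%:E.
Proof.
move=> cA Ap0 Ap1 h; rewrite (proj_eq cA Ap0 Ap1 h) /len lebesgue_measure_itv /=.
have /andP[l _] := h _ Ap1.
rewrite lte_fin; case: ifP => [_|/negbT]; first by rewrite -EFinD.
rewrite -leNgt => h2.
have -> : tf u p1 = tf u p0 by apply/eqP; rewrite eq_le h2 l.
by rewrite subrr.
Qed.

Definition hom (p : R * R) (m : R) (A : set (R * R)) : set (R * R) :=
  [set z | A (p.1 - m^-1 * p.1 + m^-1 * z.1, p.2 - m^-1 * p.2 + m^-1 * z.2)].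

Lemma hom_area p m A : 0 < m -> measurable A -> area (hom p m A) = (m%:E * (m%:E * area A))%E.
Proof.
move=> m0 mA; rewrite /hom.
have k0 : 0 < m^-1 by rewrite invr_gt0.
have := @area_aff (p.1 - m^-1 * p.1) (p.2 - m^-1 * p.2) (m^-1) k0 A mA.
by rewrite /area2 invrK.
Qed.

Lemma hom_meas p m A : measurable A -> measurable (hom p m A).
Proof.
move=> mA.
pose g (z : R * R) := (p.1 - m^-1 * p.1 + m^-1 * z.1, p.2 - m^-1 * p.2 + m^-1 * z.2).
have mg : measurable_fun setT g.
  apply/measurable_fun_pairP; split.
    apply: measurable_funD => //; apply: measurable_funM => //; exact: measurable_fst.
  apply: measurable_funD => //; apply: measurable_funM => //; exact: measurable_snd.
have := mg measurableT A mA; rewrite setTI; exact.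
Qed.

Lemma hom_prop u L p m z : convex2 L -> L p -> 0 < m -> m <= 1 ->
  L (p.1 - m^-1 * p.1 + m^-1 * z.1, p.2 - m^-1 * p.2 + m^-1 * z.2) ->
  L z /\ tf u z = tf u p + m * (tf u (p.1 - m^-1 * p.1 + m^-1 * z.1, p.2 - m^-1 * p.2 + m^-1 * z.2) - tf u p).
Proof.
move=> cL Lp m0 m1 Lw.
set w := (_, _) in Lw *.
have zE : z = (m * w.1 + (1 - m) * p.1, m * w.2 + (1 - m) * p.2).
  case: z {Lw} @w => z1 z2 /=; congr (_, _); field; exact: lt0r_neq0.
split; first by rewrite zE; apply: cL => //; exact: ltW.
rewrite /tf /w /=; field; exact: lt0r_neq0.
Qed.

Lemma final_ineq (fK fL fA0 fA1 fH0 fH1 fB0 fB1 m : R) :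
  0 < m -> m <= 1 -> 0 < fL -> 0 <= fK -> fK + fB0 + fB1 <= fL ->
  fH0 = m * (m * fA0) -> fH1 = m * (m * fA1) -> fH0 <= fB0 -> fH1 <= fB1 ->
  fL = fA0 + fA1 -> 1 - Num.sqrt (1 - fK / fL) <= 1 - m.
Proof.
move=> m0 m1 fL0 fK0 hU e0 e1 l0 l1 eL.
have key : fK + m * (m * fL) <= fL.
  rewrite eL !mulrDr; rewrite e0 in l0; rewrite e1 in l1; lra.
have mmL : 0 <= m * (m * fL) by rewrite !mulr_ge0 //; lra.
rewrite lerBlDr -lerBlDl.
have -> : 1 - (1 - m) = m by lra.
have hm : 0 <= m by exact: ltW.
rewrite -[X in X <= _](ger0_norm hm) -sqrtr_sqr ler_sqrt; last first.
  rewrite subr_ge0 ler_pdivrMr // mul1r; lra.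
rewrite lerBrDr -lerBrDl ler_pdivrMr //.
rewrite mulrBl mul1r expr2 -mulrA; lra.
Qed.

Lemma part1 (K L : set (R * R)) (u : R * R) :
  convex2 K -> compact K -> convex2 L -> compact L -> K `<=` L ->
  (0 < area L)%E -> unit_vec u ->
  1 - Num.sqrt (1 - vol_ratio K L) <= proj_ratio u K L.
Proof.
move=> cvK cpK cvL cpL KL AL0 hu.
have tc : continuous (tf u) by exact: tf_cont.
have mL := compact_meas2 cpL; have mK := compact_meas2 cpK.
have pr_ge0 : 0 <= proj_ratio u K L.
  by rewrite /proj_ratio divr_ge0 // fine_ge0 // measure_ge0.
have L0 : L !=set0.
  apply/set0P/negP => /eqP L0; move: AL0; rewrite L0 /area measure0 ltxx //.
have [p0 [p1 [Lp0 Lp1 hp]]] := ex_min_max tc L0 cpL.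
have lenL := len_proj cvL Lp0 Lp1 hp.
have [Linf|Lfin] := eqVneq (area L) +oo%E.
  by rewrite /vol_ratio Linf /= invr0 mulr0 subr0 sqrtr1 subrr.
have ALfin : area L \is a fin_num by rewrite ge0_fin_numE ?area_ge0 // lt_neqAle Lfin leey.
have finE X : measurable X -> X `<=` L -> area X = (fine (area X))%:E.
  move=> mX XL; rewrite fineK // ge0_fin_numE ?area_ge0 //.
  by apply: (le_lt_trans (area_le mX mL XL)); rewrite lt_neqAle Lfin leey.
have t01 : tf u p0 < tf u p1.
  rewrite lt_neqAle (andP (hp _ Lp1)).1 andbT; apply/negP => /eqP e.
  have : (area L <= area [set z | tf u z = tf u p0])%E.
    apply: area_le => //; first exact: tf_eq_meas.
    move=> z Lz /=; apply/eqP; rewrite eq_le (andP (hp _ Lz)).1 andbT e.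
    exact: (andP (hp _ Lz)).2.
  by rewrite line_null // leNgt AL0.
have [K0|K0] := eqVneq K set0.
  by move: pr_ge0; rewrite /vol_ratio K0 /area measure0 /= mul0r subr0 sqrtr1 subrr.
have K0' : K !=set0 := (set0P K).1 K0.
have [q0 [q1 [Kq0 Kq1 hq]]] := ex_min_max tc K0' cpK.
have lenK := len_proj cvK Kq0 Kq1 hq.
have ta : tf u p0 <= tf u q0 by exact: (andP (hp _ (KL _ Kq0))).1.
have tb : tf u q1 <= tf u p1 by exact: (andP (hp _ (KL _ Kq1))).2.
have tab : tf u q0 <= tf u q1 by exact: (andP (hq _ Kq0)).2.
rewrite /proj_ratio lenK lenL /=.
set t0 := tf u p0 in ta t01 *; set t1 := tf u p1 in tb t01 *.
set a := tf u q0 in ta tab *; set b := tf u q1 in tb tab *.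
have Lpos : 0 < t1 - t0 by lra.
have [eql|neql] := eqVneq (b - a) (t1 - t0).
  by rewrite eql divff ?gt_eqF // lerBlDr lerDl sqrtr_ge0.
have llt : b - a < t1 - t0 by rewrite lt_neqAle neql /=; lra.
set m := 1 - (b - a) / (t1 - t0).
have m0 : 0 < m by rewrite /m subr_gt0 ltr_pdivrMr // mul1r.
have m1 : m <= 1 by rewrite /m lerBlDr lerDl divr_ge0 //; lra.
have mLam : m * (t1 - t0) = (t1 - t0) - (b - a) by rewrite /m mulrBl mul1r divfK // gt_eqF.
have lm : (b - a) / (t1 - t0) = 1 - m by rewrite /m; lra.
rewrite lm.
clearbody m.
set c := t0 + (a - t0) / m.
set A0 := L `&` [set z | tf u z < c].
set A1 := L `&` [set z | c < tf u z].
set N := L `&` [set z | tf u z = c].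
set B0 := L `&` [set z | tf u z < a].
set B1 := L `&` [set z | b < tf u z].
have mA0 : measurable A0 by apply: measurableI => //; exact: tf_lt_meas.
have mA1 : measurable A1 by apply: measurableI => //; exact: tf_gt_meas.
have mN : measurable N by apply: measurableI => //; exact: tf_eq_meas.
have mB0 : measurable B0 by apply: measurableI => //; exact: tf_lt_meas.
have mB1 : measurable B1 by apply: measurableI => //; exact: tf_gt_meas.
have areaN : area N = 0%E.
  apply/eqP; rewrite eq_le area_ge0 andbT -(line_null c hu).
  by apply: area_le => //; [exact: tf_eq_meas | move=> z []].
have eqL : area L = (area A0 + area A1)%E.
  have -> : L = (A0 `|` A1) `|` N.
    apply/seteqP; split; last by move=> z [[[]|[]]|[]].
    move=> z Lz; have [h|h|h] := ltgtP (tf u z) c.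
    - by left; left.
    - by left; right.
    - by right.
  rewrite areaU //; last 2 first.
  - exact: measurableU.
  - by apply/seteqP; split => // z [[[_ h1]|[_ h1]] [_ h2]]; move: h1 h2 => /= h1 h2; rewrite h2 ltxx in h1.
  rewrite areaU //; last first.
    apply/seteqP; split => // z [[_ h1] [_ h2]]; move: h1 h2 => /= h1 h2.
    by move: (lt_trans h1 h2); rewrite ltxx.
  by rewrite areaN adde0.
have hc0 : m * (c - t0) = a - t0 by rewrite /c; field; exact: lt0r_neq0.
have hc1 : m * (c - t1) = b - t1.
  rewrite /c; have -> : t0 + (a - t0) / m - t1 = (t0 - t1) + (a - t0) / m by lra.
  rewrite mulrDr mulrCA divff ?mulr1 ?lt0r_neq0 //.
  have -> : m * (t0 - t1) = - (m * (t1 - t0)) by lra.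
  rewrite mLam; lra.
set H0 := hom p0 m A0.
set H1 := hom p1 m A1.
have mH0 : measurable H0 by exact: hom_meas.
have mH1 : measurable H1 by exact: hom_meas.
have H0B0 : H0 `<=` B0.
  move=> z; rewrite /H0 /hom /= => -[Lw tw].
  have [Lz tz] := hom_prop u cvL Lp0 m0 m1 Lw.
  split => //=; rewrite tz -/t0.
  have : m * (tf u (p0.1 - m^-1 * p0.1 + m^-1 * z.1, p0.2 - m^-1 * p0.2 + m^-1 * z.2) - t0) < m * (c - t0).
    by rewrite ltr_pM2l //; rewrite /= in tw; lra.
  rewrite hc0; lra.
have H1B1 : H1 `<=` B1.
  move=> z; rewrite /H1 /hom /= => -[Lw tw].
  have [Lz tz] := hom_prop u cvL Lp1 m0 m1 Lw.
  split => //=; rewrite tz -/t1.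
  have : m * (c - t1) < m * (tf u (p1.1 - m^-1 * p1.1 + m^-1 * z.1, p1.2 - m^-1 * p1.2 + m^-1 * z.2) - t1).
    by rewrite ltr_pM2l //; rewrite /= in tw; lra.
  rewrite hc1; lra.
have aH0 : area H0 = (m%:E * (m%:E * area A0))%E by exact: hom_area.
have aH1 : area H1 = (m%:E * (m%:E * area A1))%E by exact: hom_area.
have leH0 := area_le mH0 mB0 H0B0.
have leH1 := area_le mH1 mB1 H1B1.
have KB0 : K `&` B0 = set0.
  apply/seteqP; split => // z [Kz [_ h]]; move: h => /=.
  by rewrite ltNge (andP (hq _ Kz)).1.
have KB1 : (K `|` B0) `&` B1 = set0.
  apply/seteqP; split => // z [[Kz|[_ h0]] [_ h]]; move: h => /=.
    by rewrite ltNge (andP (hq _ Kz)).2.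
  move: h0 => /= h0 h; have := lt_le_trans h0 tab; move/(lt_trans h); by rewrite ltxx.
have leU : (area K + area B0 + area B1 <= area L)%E.
  rewrite -areaU // -areaU //; last exact: measurableU.
  apply: area_le => //; first by apply: measurableU => //; exact: measurableU.
  by move=> z [[/KL|[]]|[]].
have BL0 : B0 `<=` L by move=> z [].
have BL1 : B1 `<=` L by move=> z [].
have AL0' : A0 `<=` L by move=> z [].
have AL1' : A1 `<=` L by move=> z [].
rewrite (finE _ mK KL) (finE _ mB0 BL0) (finE _ mB1 BL1) (finE _ mL (@subset_refl _ L)) -!EFinD lee_fin in leU.
rewrite (finE _ mH0 (subset_trans H0B0 BL0)) (finE _ mB0 BL0) (finE _ mA0 AL0') -!EFinM in aH0 leH0.
rewrite (finE _ mH1 (subset_trans H1B1 BL1)) (finE _ mB1 BL1) (finE _ mA1 AL1') -!EFinM in aH1 leH1.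
rewrite (finE _ mL (@subset_refl _ L)) (finE _ mA0 AL0') (finE _ mA1 AL1') -EFinD in eqL.
rewrite lee_fin in leH0; rewrite lee_fin in leH1.
rewrite /vol_ratio.
apply: (final_ineq m0 m1 _ _ leU (EFin_inj aH0) (EFin_inj aH1) leH0 leH1 (EFin_inj eqL)).
  by move: AL0; rewrite (finE _ mL (@subset_refl _ L)) lte_fin.
by rewrite fine_ge0 // area_ge0.
Qed.

Lemma closed_le_f (f : R * R -> R) c : continuous f -> closed [set z | f z <= c].
Proof.
move=> cf; rewrite (_ : [set z | f z <= c] = f @^-1` [set x | x <= c]) //.
by apply: preimage_closed; [move=> z _; exact: cf | exact: closed_le].
Qed.

Definition triL : set (R * R) :=
  (`[0, 1]%classic `*` `[0, 1]%classic) `&` [set z | z.1 + z.2 <= 1].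

Lemma triLP z : triL z <-> [/\ 0 <= z.1, 0 <= z.2 & z.1 + z.2 <= 1].
Proof.
rewrite /triL /=; split.
  by move=> [[]]; rewrite /= !in_itv /= => /andP[? ?] /andP[? ?] ?.
move=> [h1 h2 h3]; split => //; split; rewrite /= in_itv /=; apply/andP; split => //; lra.
Qed.

Lemma triL_compact : compact triL.
Proof.
apply: compact_closedI; first by apply: compact_setX; exact: segment_compact.
apply: closed_le_f => z; apply: cvgD; [exact: cvg_fst | exact: cvg_snd].
Qed.

Lemma triL_convex : convex2 triL.
Proof.
move=> x y /triLP[x1 x2 x3] /triLP[y1 y2 y3] t t0 t1; apply/triLP; split => /=; nra.
Qed.

Lemma area_box (a b c d : R) : a <= b -> c <= d ->
  area (`[a, b]%classic `*` `[c, d]%classic) = ((b - a) * (d - c))%:E.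
Proof.
move=> ab cd; rewrite /area product_measure1E //.
change ((@lebesgue_measure R `[a, b]%classic) * (@lebesgue_measure R `[c, d]%classic) = ((b - a) * (d - c))%:E)%E.
rewrite !lebesgue_measure_itv /= !lte_fin.
case: ifP => [_|/negbT]; last first.
  rewrite -leNgt => ba; have -> : b = a by apply/eqP; rewrite eq_le ba ab.
  by rewrite subrr mul0r mul0e.
case: ifP => [_|/negbT]; last first.
  rewrite -leNgt => dc; have -> : d = c by apply/eqP; rewrite eq_le dc cd.
  by rewrite subrr mulr0 mule0.
by rewrite -!EFinD -EFinM.
Qed.

Lemma triL_pt (x : R) : 0 <= x -> x <= 1 -> triL (x, 0).
Proof. by move=> h1 h2; apply/triLP; split => //=; rewrite addr0. Qed.

Lemma part2 (r : R) : 0 <= r -> r <= 1 ->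
  exists (K L : set (R * R)) (u : R * R),
      [/\ convex2 K, compact K, convex2 L, compact L & K `<=` L] /\
      (0 < area L)%E /\ unit_vec u /\ vol_ratio K L = r /\
      proj_ratio u K L = 1 - Num.sqrt (1 - vol_ratio K L).
Proof.
move=> r0 r1.
set m := Num.sqrt (1 - r).
have m0 : 0 <= m by exact: sqrtr_ge0.
have m1 : m <= 1 by rewrite /m -[X in _ <= X]sqrtr1 ler_sqrt //; lra.
have mm : m * m = 1 - r by rewrite -expr2 sqr_sqrtr //; lra.
set s := 1 - m.
have s0 : 0 <= s by rewrite /s subr_ge0.
have s1 : s <= 1 by rewrite /s lerBlDr lerDl.
set L := triL.
set K := L `&` [set z | z.1 <= s].
set u : R * R := (0, -1).
have tfu z : tf u z = z.1 by rewrite /tf /= mul0r sub0r mulN1r opprK.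
have cpK : compact K.
  by apply: compact_closedI; [exact: triL_compact | apply: closed_le_f => z; exact: cvg_fst].
have cvK : convex2 K.
  move=> x y [Lx xs] [Ly ys] t t0 t1; split; first exact: triL_convex.
  rewrite /= in xs ys *; nra.
have KL : K `<=` L by move=> z [].
have mL : measurable L := compact_meas2 triL_compact.
have mK : measurable K := compact_meas2 cpK.
have AL0 : (0 < area L)%E.
  apply: (@lt_le_trans _ _ (area (`[0, 1/2]%classic `*` `[0, 1/2]%classic))).
    by rewrite area_box ?lte_fin ?mulr_gt0 //; lra.
  apply: area_le => //; first by apply: measurableX; exact: measurable_itv.
  move=> z [] /=; rewrite !in_itv /= => /andP[h1 h2] /andP[h3 h4]; apply/triLP; split; lra.
have ALfin : area L \is a fin_num.
  rewrite ge0_fin_numE ?area_ge0 //.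
  apply: (@le_lt_trans _ _ (area (`[0, 1]%classic `*` `[0, 1]%classic))); last first.
    by rewrite area_box ?ltry //; lra.
  apply: area_le => //; first by apply: measurableX; exact: measurable_itv.
  by move=> z [].
have hu : unit_vec u by rewrite /unit_vec /= expr2 mul0r add0r expr2 mulN1r opprK.
set A := L `&` [set z | s < z.1].
have mA : measurable A.
  apply: measurableI => //; rewrite (_ : [set z | s < z.1] = [set z | s < tf u z]).
    exact: tf_gt_meas.
  by apply/seteqP; split => z /=; rewrite tfu.
have eqL : area L = (area K + area A)%E.
  rewrite -areaU //; last first.
    apply/seteqP; split => // z [[_ h1] [_ h2]]; move: h1 h2 => /= h1 h2.
    by move: (le_lt_trans h1 h2); rewrite ltxx.
  congr area; apply/seteqP; split; last by move=> z [[]|[]].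
  by move=> z Lz; have [h|h] := leP z.1 s; [left|right].
have eqA : area A = (m%:E * (m%:E * area L))%E.
  have [m00|mpos] := eqVneq m 0.
    have -> : A = set0.
      apply/seteqP; split => // z [/triLP[h1 h2 h3] h4]; move: h4; rewrite /= /s m00 => h4; clear -h2 h3 h4; lra.
    by rewrite m00 /area measure0 mul0e.
  have mp : 0 < m by rewrite lt_neqAle eq_sym mpos.
  set A' := L `&` [set z | 0 < z.1].
  have mA' : measurable A'.
    apply: measurableI => //; rewrite (_ : [set z | 0 < z.1] = [set z | 0 < tf u z]).
      exact: tf_gt_meas.
    by apply/seteqP; split => z /=; rewrite tfu.
  have -> : A = hom (1, 0) m A'.
    apply/seteqP; split => z /=.
      move=> [/triLP[h1 h2 h3] h4]; rewrite /= /s in h4.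
      have e1 : 1 - m^-1 * 1 + m^-1 * z.1 = m^-1 * (z.1 - (1 - m)) by field; exact: lt0r_neq0.
      have e2 : 0 - m^-1 * 0 + m^-1 * z.2 = m^-1 * z.2 by field; exact: lt0r_neq0.
      rewrite /hom /= e1 e2; have mi : 0 < m^-1 by rewrite invr_gt0.
      split; last by rewrite /= pmulr_rgt0 //; clear -h4; lra.
      apply/triLP; split.
      - by rewrite pmulr_rge0 //; clear -h4; lra.
      - by rewrite pmulr_rge0.
      - by rewrite -mulrDr ler_pdivrMl // mulr1; clear -h3; lra.
    rewrite /hom /= => -[/triLP[h1 h2 h3] h4]; rewrite /= in h1 h2 h3 h4.
    have e1 : 1 - m^-1 * 1 + m^-1 * z.1 = m^-1 * (z.1 - (1 - m)) by field; exact: lt0r_neq0.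
    have e2 : 0 - m^-1 * 0 + m^-1 * z.2 = m^-1 * z.2 by field; exact: lt0r_neq0.
    rewrite e1 in h1 h3 h4; rewrite e2 in h2 h3; have mi : 0 < m^-1 by rewrite invr_gt0.
    rewrite pmulr_rgt0 // in h4; rewrite pmulr_rge0 // in h2.
    rewrite -mulrDr ler_pdivrMl // mulr1 in h3.
    split; last by rewrite /= /s; clear -h4; lra.
    by apply/triLP; split; clear -m1 h4 h2 h3; lra.
  rewrite hom_area //.
  have -> : area A' = area L.
    have -> : L = A' `|` (L `&` [set z | tf u z = 0]).
      apply/seteqP; split; last by move=> z [[]|[]].
      move=> z Lz; have [/triLP[h1 _ _]] := (conj Lz Lz).
      have [h|h] := ltP 0 z.1; first by left.
      by right; split => //=; rewrite tfu; apply/eqP; rewrite eq_le h h1.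
    rewrite areaU //; last 2 first.
    - by apply: measurableI => //; exact: tf_eq_meas.
    - apply/seteqP; split => // z [[_ h1] [_ h2]]; move: h1 h2 => /= h1 h2.
      by rewrite tfu in h2; rewrite h2 ltxx in h1.
    have -> : area (L `&` [set z | tf u z = 0]) = 0%E.
      apply/eqP; rewrite eq_le area_ge0 andbT -(line_null 0 hu).
      apply: area_le; first by apply: measurableI => //; exact: tf_eq_meas.
        exact: tf_eq_meas.
      by move=> z [].
    by rewrite adde0.
  by [].
have AL := fineK ALfin.
have AK : area K \is a fin_num.
  rewrite ge0_fin_numE ?area_ge0 //; apply: (le_lt_trans (area_le mK mL KL)).
  by rewrite -AL ltry.
have AA : area A \is a fin_num.
  rewrite ge0_fin_numE ?area_ge0 //; apply: (le_lt_trans (area_le mA mL (fun z (h : A z) => h.1))).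
  by rewrite -AL ltry.
rewrite -(fineK AK) -(fineK AA) -AL -EFinD in eqL.
rewrite -(fineK AA) -AL -!EFinM in eqA.
have eqL' := EFin_inj eqL; have eqA' := EFin_inj eqA.
have fL0 : 0 < fine (area L) by rewrite -lte_fin AL.
have vr : vol_ratio K L = r.
  have hK : fine (area K) = r * fine (area L) by rewrite eqA' mulrA mm in eqL'; clear -eqL'; lra.
  by rewrite /vol_ratio hK mulfK // gt_eqF.
exists K, L, u; split; first by split => //; try exact: triL_convex; try exact: triL_compact.
split => //; split => //; split => //.
have K00 : K (0, 0) by split; [exact: triL_pt | exact: s0].
have Ks0 : K (s, 0) by split; [exact: triL_pt | rewrite /=].
have hK : forall x, K x -> tf u (0, 0) <= tf u x <= tf u (s, 0).
  by move=> x [/triLP[h1 _ _] h2]; rewrite !tfu /=; apply/andP; split.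
have L00 : L (0, 0) by exact: triL_pt.
have L10 : L (1, 0) by exact: triL_pt.
have hL : forall x, L x -> tf u (0, 0) <= tf u x <= tf u (1, 0).
  move=> x /triLP[h1 h2 h3]; rewrite !tfu /=; apply/andP; split => //.
  by clear -h2 h3; lra.
rewrite /proj_ratio (len_proj cvK K00 Ks0 hK) (len_proj triL_convex L00 L10 hL) vr /= !tfu /=.
by rewrite !subr0 divr1.
Qed.


End S.


Theorem proposition10 (R : realType) :
  (forall (K L : set (R * R)) (u : R * R),
      convex2 K -> compact K -> convex2 L -> compact L -> K `<=` L ->
      (0 < area L)%E -> unit_vec u ->
      1 - Num.sqrt (1 - vol_ratio K L) <= proj_ratio u K L)
  /\
  (forall r : R, 0 <= r -> r <= 1 ->
     exists (K L : set (R * R)) (u : R * R),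
      [/\ convex2 K, compact K, convex2 L, compact L & K `<=` L] /\
      (0 < area L)%E /\ unit_vec u /\ vol_ratio K L = r /\
      proj_ratio u K L = 1 - Num.sqrt (1 - vol_ratio K L)).
Proof. by split; [exact: part1 | exact: part2]. Qed.
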